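(* Let $\mathcal H$ be a separable complex Hilbert space, $A\in L(\mathcal H)^+$, $\mathcal S$ a closed subspace, $\mathcal N=\mathcal S\cap N(A)$, and $T\in L(\mathcal H)$ with $R(T)\subseteq\mathcal S$. Then $T$ is an $A$-projection into $\mathcal S$ if and only if $(A,\mathcal S)$ is compatible and $P_{\mathcal S\ominus\mathcal N}T=P_{A,\mathcal S\ominus\mathcal N}$.
   Context: $N(\cdot)$ is the nullspace, $\mathcal S\ominus\mathcal N=\mathcal S\cap\mathcal N^\perp$, $P_{\mathcal M}$ the orthogonal projection onto $\mathcal M$. $(A,\mathcal S)$ is compatible if there exists $Q\in L(\mathcal H)$ with $Q^2=Q$, $R(Q)=\mathcal S$, $AQ=Q^*A$. When $(A,\mathcal S)$ is compatible, $\mathcal H=(\mathcal S\ominus\mathcal N)\dotplus A(\mathcal S)^\perp$ and $P_{A,\mathcal S\ominus\mathcal N}$ denotes the (bounded) oblique projection with range $\mathcal S\ominus\mathcal N$ and nullspace $A(\mathcal S)^\perp$. With $\|z\|_A=\langle Az,z\rangle^{1/2}$, $T$ is an $A$-projection into $\mathcal S$ if $R(T)\subseteq\mathcal S$ and $\|y-Ty\|_A\le\|y-s\|_A$ for all $y\in\mathcal H$, $s\in\mathcal S$. *)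

(* Defs.v *)
From HB Require Import structures.
From mathcomp Require Import all_boot all_order all_algebra.
From mathcomp Require Import reals.
From mathcomp Require Export complex.
Set Implicit Arguments. Unset Strict Implicit. Unset Printing Implicit Defensive.
Import Order.TTheory GRing.Theory Num.Theory.
Local Open Scope ring_scope.

Section Hilbert.
Variables (R : realType) (V : lmodType R[i]) (ip : V -> V -> R[i]).

Definition is_inner_product : Prop :=
  [/\ forall (a : R[i]) x y z, ip (a *: x + y) z = a * ip x z + ip y z,
      forall x y, ip y x = (ip x y)^*,
      forall x, 0 <= ip x x &
      forall x, ip x x = 0 -> x = 0].

Definition hnorm (x : V) : R := Num.sqrt (complex.Re (ip x x)).

Definition converges (u : nat -> V) (l : V) : Prop :=
  forall e : R, 0 < e -> exists N, forall n, (N <= n)%N -> hnorm (u n - l) < e.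

Definition cauchy_seq (u : nat -> V) : Prop :=
  forall e : R, 0 < e -> exists N, forall n m, (N <= n)%N -> (N <= m)%N ->
    hnorm (u n - u m) < e.

Definition complete : Prop := forall u, cauchy_seq u -> exists l, converges u l.

Definition separable : Prop :=
  exists d : nat -> V, forall x (e : R), 0 < e -> exists n, hnorm (x - d n) < e.

Definition hilbert_space : Prop := is_inner_product /\ complete.

Definition bounded_op (f : V -> V) : Prop :=
  (forall (a : R[i]) x y, f (a *: x + y) = a *: f x + f y) /\
  exists M : R, forall x, hnorm (f x) <= M * hnorm x.

Definition positive_op (A : V -> V) : Prop :=
  bounded_op A /\ forall x, 0 <= ip (A x) x.

Definition closed_subspace (S : V -> Prop) : Prop :=
  [/\ S 0,
      forall (a : R[i]) x y, S x -> S y -> S (a *: x + y) &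
      forall u l, (forall n, S (u n)) -> converges u l -> S l].

Definition op_null (f : V -> V) : V -> Prop := fun x => f x = 0.
Definition op_range (f : V -> V) : V -> Prop := fun y => exists x, y = f x.
Definition op_image (f : V -> V) (S : V -> Prop) : V -> Prop :=
  fun y => exists x, S x /\ y = f x.
Definition orth (M : V -> Prop) : V -> Prop :=
  fun x => forall y, M y -> ip x y = 0.
Definition inter (M N : V -> Prop) : V -> Prop := fun x => M x /\ N x.
Definition ominus (S N : V -> Prop) : V -> Prop := inter S (orth N).

Definition is_adjoint (Q Qs : V -> V) : Prop :=
  forall x y, ip (Q x) y = ip x (Qs y).

Definition compatible (A : V -> V) (S : V -> Prop) : Prop :=
  exists Q Qs : V -> V,
    [/\ bounded_op Q, forall x, Q (Q x) = Q x, forall y, S y <-> op_range Q y,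
        bounded_op Qs /\ is_adjoint Q Qs & forall x, A (Q x) = Qs (A x)].

Definition orth_proj (M : V -> Prop) (P : V -> V) : Prop :=
  [/\ bounded_op P, forall x, M (P x) & forall x y, M y -> ip (x - P x) y = 0].

Definition oblique_proj (M K : V -> Prop) (Q : V -> V) : Prop :=
  [/\ bounded_op Q, forall x, Q (Q x) = Q x,
      forall y, M y <-> op_range Q y & forall x, K x <-> op_null Q x].

Definition Anorm (A : V -> V) (z : V) : R := Num.sqrt (complex.Re (ip (A z) z)).

Definition A_projection (A : V -> V) (S : V -> Prop) (T : V -> V) : Prop :=
  (forall x, S (T x)) /\
  forall y s, S s -> Anorm A (y - T y) <= Anorm A (y - s).

End Hilbert.

(* Submission.v *)
Require Import Defs.
From HB Require Import structures.
From mathcomp Require Import all_boot all_order all_algebra.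
From mathcomp Require Import reals complex.
From mathcomp Require Import ring lra.
From mathcomp Require boolp classical_sets.
Import Order.TTheory GRing.Theory Num.Theory.
Local Open Scope ring_scope.
Set Implicit Arguments. Unset Strict Implicit.

Section Cpx.
Variable R : realType.
Lemma conjE (x : R[i]) : x^* = conjc x. Proof. reflexivity. Qed.
Lemma cM (a b c d : R) : (Complex a b) * (Complex c d) = Complex (a*c - b*d) (a*d + b*c).
Proof. reflexivity. Qed.
Lemma cD (a b c d : R) : (Complex a b) + (Complex c d) = Complex (a+c) (b+d).
Proof. reflexivity. Qed.
Lemma cN (a b : R) : - (Complex a b) = Complex (-a) (-b).
Proof. reflexivity. Qed.
Lemma c0 : (0 : R[i]) = Complex 0 0. Proof. reflexivity. Qed.
Lemma c1 : (1 : R[i]) = Complex 1 0. Proof. reflexivity. Qed.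
Lemma cR (a : R) : (a%:C)%C = Complex a 0. Proof. reflexivity. Qed.
Lemma cle (a b c d : R) : (Complex a b <= Complex c d) = (d == b) && (a <= c).
Proof. reflexivity. Qed.
Lemma cJ (a b : R) : conjc (Complex a b) = Complex a (-b). Proof. reflexivity. Qed.
Lemma ceq (a b c d : R) : a = c -> b = d -> Complex a b = Complex c d.
Proof. by move=> -> ->. Qed.
Lemma conjK (x : R[i]) : x^*^* = x.
Proof. by case: x => a b; rewrite !conjE !cJ opprK. Qed.
Lemma conjD (x y : R[i]) : (x + y)^* = x^* + y^*.
Proof. case: x => a b; case: y => c d; rewrite !conjE cD !cJ cD; apply: ceq; ring. Qed.
Lemma conjM (x y : R[i]) : (x * y)^* = x^* * y^*.
Proof. case: x => a b; case: y => c d; rewrite !conjE cM !cJ cM; apply: ceq; ring. Qed.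
Lemma conjN (x : R[i]) : (- x)^* = - x^*.
Proof. case: x => a b; rewrite !conjE cN !cJ cN; apply: ceq; ring. Qed.
Lemma conj0 : (0 : R[i])^* = 0.
Proof. by rewrite c0 conjE cJ oppr0. Qed.
Lemma ceq0 (a b : R) : a ^+ 2 + b ^+ 2 <= 0 -> Complex a b = 0.
Proof. move=> h; rewrite c0; apply: ceq; nra. Qed.
End Cpx.


Section IP.
Variables (R : realType) (V : lmodType R[i]) (ip : V -> V -> R[i]).
Hypothesis Hip : is_inner_product ip.

Let lin : forall (a : R[i]) x y z, ip (a *: x + y) z = a * ip x z + ip y z.
Proof. by case: Hip. Qed.
Lemma ipJ x y : ip y x = (ip x y)^*.
Proof. by case: Hip. Qed.
Lemma ipxx_ge0 x : 0 <= ip x x.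
Proof. by case: Hip. Qed.
Lemma ipxx_eq0 x : ip x x = 0 -> x = 0.
Proof. by case: Hip => _ _ _; apply. Qed.

Lemma ipDl x y z : ip (x + y) z = ip x z + ip y z.
Proof. by rewrite -[x]scale1r lin mul1r scale1r. Qed.
Lemma ip0l z : ip 0 z = 0.
Proof. by apply: (addrI (ip 0 z)); rewrite -ipDl !addr0. Qed.
Lemma ipZl a x z : ip (a *: x) z = a * ip x z.
Proof. by rewrite -[a *: x]addr0 lin ip0l addr0. Qed.
Lemma ipNl x z : ip (- x) z = - ip x z.
Proof. by rewrite -scaleN1r ipZl mulN1r. Qed.
Lemma ipBl x y z : ip (x - y) z = ip x z - ip y z.
Proof. by rewrite ipDl ipNl. Qed.
Lemma ipDr x y z : ip z (x + y) = ip z x + ip z y.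
Proof. by rewrite ipJ ipDl conjD -!ipJ. Qed.
Lemma ip0r z : ip z 0 = 0.
Proof. by rewrite ipJ ip0l conj0. Qed.
Lemma ipZr a x z : ip z (a *: x) = a^* * ip z x.
Proof. by rewrite ipJ ipZl conjM -ipJ. Qed.
Lemma ipNr x z : ip z (- x) = - ip z x.
Proof. by rewrite ipJ ipNl conjN -ipJ. Qed.
Lemma ipBr x y z : ip z (x - y) = ip z x - ip z y.
Proof. by rewrite ipDr ipNr. Qed.

Definition q x := complex.Re (ip x x).
Lemma ipxxE x : ip x x = Complex (q x) 0.
Proof. have := ipxx_ge0 x; rewrite /q; case: (ip x x) => a b; rewrite c0 cle /= => /andP[/eqP -> _]. by []. Qed.
Lemma q_ge0 x : 0 <= q x.
Proof. have := ipxx_ge0 x; rewrite /q; case: (ip x x) => a b; rewrite c0 cle /= => /andP[_ ->]. by []. Qed.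
Lemma q_eq0 x : q x = 0 -> x = 0.
Proof. move=> h; apply: ipxx_eq0; by rewrite ipxxE h. Qed.
Lemma q0 : q 0 = 0.
Proof. by rewrite /q ip0l. Qed.

End IP.


Lemma ge0E (R : realType) (z : R[i]) : 0 <= z -> z = Complex (complex.Re z) 0 /\ 0 <= complex.Re z.
Proof. by case: z => a b; rewrite c0 cle /= => /andP[/eqP <- h]; split. Qed.

Section Form.
Variables (R : realType) (V : lmodType R[i]) (ip : V -> V -> R[i]).
Hypothesis Hip : is_inner_product ip.
Variable B : V -> V.
Hypothesis Blin : forall (a : R[i]) x y, B (a *: x + y) = a *: B x + B y.
Hypothesis Bsa : forall x y, ip (B x) y = ip x (B y).
Hypothesis Bpos : forall x, 0 <= ip (B x) x.

Lemma BD x y : B (x + y) = B x + B y.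
Proof. by have := Blin 1 x y; rewrite !scale1r. Qed.
Lemma B0 : B 0 = 0.
Proof. by apply: (addrI (B 0)); rewrite -BD !addr0. Qed.
Lemma BZ a x : B (a *: x) = a *: B x.
Proof. by rewrite -[a *: x]addr0 Blin B0 addr0. Qed.
Lemma BN x : B (- x) = - B x.
Proof. by rewrite -scaleN1r BZ scaleN1r. Qed.
Lemma BB x y : B (x - y) = B x - B y.
Proof. by rewrite BD BN. Qed.

Lemma form_expand u w t :
  ip (B (u + t *: w)) (u + t *: w) =
  ip (B u) u + t^* * ip (B u) w + t * (ip (B u) w)^* + t * t^* * ip (B w) w.
Proof.
rewrite BD BZ !(ipDl Hip) !(ipDr Hip) !(ipZl Hip) !(ipZr Hip).
rewrite [ip (B w) u]Bsa [ip w (B u)](ipJ Hip).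
ring.
Qed.

Lemma form_min u w :
  (forall t, complex.Re (ip (B u) u) <= complex.Re (ip (B (u + t *: w)) (u + t *: w))) ->
  ip (B u) w = 0.
Proof.
move=> H.
have [Eb b0] := ge0E (Bpos w).
set b := complex.Re (ip (B w) w) in Eb b0.
case E: (ip (B u) w) => [c1 c2].
set k := (b + 1)^-1.
have [k0 kb] : 0 < k /\ k * (b + 1) = 1.
  clear Eb E H; rewrite /k; have b1 : 0 < b + 1 by lra.
  by split; [rewrite invr_gt0 | rewrite mulVf // gt_eqF].
have := H (Complex (- (c1 * k)) (- (c2 * k))).
rewrite form_expand E Eb.
case: (ip (B u) u) => x1 x2.
rewrite !conjE !cJ !cM !cD /= => h.
apply: ceq0; clear E Eb H.
have h2 : 0 <= k * (c1 ^+ 2 + c2 ^+ 2) * (k * b - 2) by nra.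
have h3 : k * b <= 1 by nra.
have h4 : k * (c1 ^+ 2 + c2 ^+ 2) <= 0 by nra.
nra.
Qed.

End Form.


Section Pol.
Variables (R : realType) (V : lmodType R[i]) (ip : V -> V -> R[i]).
Hypothesis Hip : is_inner_product ip.
Variable B : V -> V.
Hypothesis Blin : forall (a : R[i]) x y, B (a *: x + y) = a *: B x + B y.
Hypothesis Bpos : forall x, 0 <= ip (B x) x.

Lemma pos_sa x y : ip (B x) y = ip x (B y).
Proof.
have h1 := Bpos (x + y).
have h2 := Bpos (x + (Complex 0 1) *: y).
rewrite (BD Blin) !(ipDl Hip) !(ipDr Hip) in h1.
rewrite (BD Blin) (BZ Blin) !(ipDl Hip) !(ipDr Hip) !(ipZl Hip) !(ipZr Hip) in h2.
have [E1 _] := ge0E (Bpos x).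
have [E2 _] := ge0E (Bpos y).
rewrite (ipJ Hip (B y) x).
move: h1 h2; rewrite E1 E2.
case: (ip (B x) y) => p1 p2; case: (ip (B y) x) => r1 r2.
rewrite !conjE !cJ !cM !cD c0 !cle /= => /andP[/eqP h1 _] /andP[/eqP h2 _].
apply: ceq; lra.
Qed.
End Pol.


Lemma sq_le (R : realType) (a b : R) : 0 <= b -> a ^+ 2 <= b ^+ 2 -> a <= b.
Proof. move=> hb h; nra. Qed.

Lemma inv_facts (R : realType) (b : R) : 0 < b -> 0 < b^-1 /\ b^-1 * b = 1.
Proof. by move=> h; split; [rewrite invr_gt0 | rewrite mulVf // gt_eqF]. Qed.

Section Norm.
Variables (R : realType) (V : lmodType R[i]) (ip : V -> V -> R[i]).
Hypothesis Hip : is_inner_product ip.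
Local Notation q := (q ip).
Local Notation hn := (hnorm ip).

Lemma id_lin : forall (a : R[i]) (x y : V), (fun v => v) (a *: x + y) = a *: x + y.
Proof. by []. Qed.
Lemma id_sa : forall x y : V, ip x y = ip x y.
Proof. by []. Qed.

Lemma CS x y : complex.Re (ip x y) ^+ 2 + complex.Im (ip x y) ^+ 2 <= q x * q y.
Proof.
have [qy0|qy0] := eqVneq (q y) 0.
  by rewrite qy0 mulr0 (q_eq0 Hip qy0) (ip0r Hip) c0 /=; lra.
have qyp : 0 < q y by rewrite lt0r qy0 (q_ge0 Hip).
have [k0 kq] := inv_facts qyp.
set k := (q y)^-1 in k0 kq.
have := q_ge0 Hip (x + (Complex (- (complex.Re (ip x y) * k)) (- (complex.Im (ip x y) * k))) *: y).
rewrite /Submission.q (@form_expand _ _ _ Hip (fun v => v) id_lin id_sa).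
rewrite (ipxxE Hip y) (ipxxE Hip x).
case: (ip x y) => c1 c2 /=.
move=> h.
have qx0 := q_ge0 Hip x.
move: h k0 kq qyp qx0; clear; set a := q x; set b := q y => h k0 kq qyp qx0.
have h2 : k * (c1 ^+ 2 + c2 ^+ 2) <= a by nra.
have : (k * b) * (c1 ^+ 2 + c2 ^+ 2) <= a * b by nra.
by rewrite kq mul1r.
Qed.

Lemma hnE x : hn x = Num.sqrt (q x). Proof. by []. Qed.
Lemma hn_ge0 x : 0 <= hn x. Proof. exact: sqrtr_ge0. Qed.
Lemma hn_sqr x : hn x ^+ 2 = q x. Proof. by rewrite hnE sqr_sqrtr // (q_ge0 Hip). Qed.

Lemma Re_le x y : complex.Re (ip x y) <= hn x * hn y.
Proof.
apply: sq_le; first by rewrite mulr_ge0 // hn_ge0.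
rewrite exprMn !hn_sqr; have := CS x y; have := sqr_ge0 (complex.Im (ip x y)); lra.
Qed.
Lemma abs_le x y : complex.Re (ip x y) ^+ 2 + complex.Im (ip x y) ^+ 2 <= (hn x * hn y) ^+ 2.
Proof. by rewrite exprMn !hn_sqr; exact: CS. Qed.

Lemma qD x y : q (x + y) = q x + q y + 2 * complex.Re (ip x y).
Proof.
rewrite /Submission.q !(ipDl Hip) !(ipDr Hip) (ipJ Hip x y).
case: (ip x y) => a b; case: (ip x x) => c d; case: (ip y y) => e f.
rewrite !conjE !cJ !cD /=; ring.
Qed.

Lemma qZ a x : q (a *: x) = (complex.Re a ^+ 2 + complex.Im a ^+ 2) * q x.
Proof.
rewrite /Submission.q (ipZl Hip) (ipZr Hip) (ipxxE Hip x).
case: a => a1 a2; rewrite !conjE !cJ !cM /=; ring.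
Qed.

Lemma qN x : q (- x) = q x.
Proof. rewrite -scaleN1r qZ c1 cN /=; ring. Qed.
Lemma qB x y : q (x - y) = q (y - x).
Proof. by rewrite -qN opprB. Qed.

Lemma parallelogram x y : q (x + y) + q (x - y) = 2 * q x + 2 * q y.
Proof.
rewrite !qD qN (ipNr Hip); case: (ip x y) => a b /=; ring.
Qed.

Lemma hn_tri x y : hn (x + y) <= hn x + hn y.
Proof.
apply: sq_le; first by rewrite addr_ge0 // hn_ge0.
rewrite hn_sqr qD; have := Re_le x y; rewrite -!hn_sqr; lra.
Qed.
Lemma hn0 : hn 0 = 0.
Proof. by rewrite hnE (q0 Hip) sqrtr0. Qed.
Lemma hnN x : hn (- x) = hn x.
Proof. by rewrite !hnE qN. Qed.
Lemma hnB x y : hn (x - y) = hn (y - x).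
Proof. by rewrite !hnE qB. Qed.

Lemma bound_ge0 (f : V -> V) : bounded_op ip f ->
  exists M, 0 <= M /\ forall x, hn (f x) <= M * hn x.
Proof.
case=> _ [M HM]; exists `|M|; split => // x.
apply: le_trans (HM x) _; apply: ler_wpM2r; [exact: hn_ge0 | exact: ler_norm].
Qed.

Lemma q_bound (f : V -> V) M : 0 <= M -> (forall x, hn (f x) <= M * hn x) ->
  forall x, q (f x) <= M ^+ 2 * q x.
Proof.
move=> M0 h x; rewrite -!hn_sqr -exprMn; have := h x; have := hn_ge0 (f x); nra.
Qed.

End Norm.


Definition epsn (R : realType) (k : nat) : R := (k.+1%:R)^-1.

Lemma epsn_gt0 (R : realType) k : 0 < epsn R k.
Proof. by rewrite /epsn invr_gt0 ltr0Sn. Qed.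

Lemma epsn_small (R : realType) (d : R) : 0 < d -> exists N, forall k, (N <= k)%N -> epsn R k < d.
Proof.
move=> d0; exists (Num.truncn (d^-1)) => k hk.
have h1 := Num.Theory.truncnS_gt (d^-1).
have h2 : ((Num.truncn d^-1).+1%:R : R) <= k.+1%:R by rewrite ler_nat ltnS.
have kp : (0 : R) < k.+1%:R by rewrite ltr0Sn.
have [e0 ek] := inv_facts kp.
have [i0 id] := inv_facts d0.
rewrite /epsn; move: h1 h2 kp e0 ek i0 id; set e := (k.+1%:R)^-1; set K := (k.+1%:R : R);
  set I := d^-1; set T := ((Num.truncn I).+1%:R : R) => h1 h2 kp e0 ek i0 id.
have h3 : I < K by lra.
have : e * d * I < e * d * K by rewrite ltr_pM2l // mulr_gt0.
have L : e * d * I = e by rewrite -mulrA (mulrC d) id mulr1.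
have Rr : e * d * K = d by rewrite mulrC mulrA (mulrC K) ek mul1r.
by rewrite L Rr.
Qed.

Section Proj.
Variables (R : realType) (V : lmodType R[i]) (ip : V -> V -> R[i]).
Hypothesis Hip : is_inner_product ip.
Hypothesis Hcomp : complete ip.
Variable C : V -> Prop.
Hypothesis HC : closed_subspace ip C.
Local Notation q := (q ip).
Local Notation hn := (hnorm ip).

Lemma C0 : C 0. Proof. by case: HC. Qed.
Lemma Clin a x y : C x -> C y -> C (a *: x + y). Proof. by case: HC => _ h _; apply: h. Qed.
Lemma CD x y : C x -> C y -> C (x + y).
Proof. by move=> hx hy; have := Clin 1 hx hy; rewrite scale1r. Qed.
Lemma CZ a x : C x -> C (a *: x).
Proof. by move=> hx; have := Clin a hx C0; rewrite addr0. Qed.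
Lemma CN x : C x -> C (- x).
Proof. by move=> hx; rewrite -scaleN1r; apply: CZ. Qed.
Lemma CB x y : C x -> C y -> C (x - y).
Proof. by move=> hx hy; apply: CD => //; apply: CN. Qed.
Lemma Clim u l : (forall n, C (u n)) -> converges ip u l -> C l.
Proof. by case: HC => _ _ h; apply: h. Qed.

Lemma proj_ex x : exists p, C p /\ (forall c, C c -> ip (x - p) c = 0).
Proof.
pose E := fun r : R => exists c, C c /\ r = q (x - c).
have hinf : classical_sets.has_inf E.
  split; first by exists (q (x - 0)); exists 0; split => //; exact: C0.
  exists 0 => r [c [_ ->]]; exact: (q_ge0 Hip).
pose d := reals.inf E.
have dlb : forall c, C c -> d <= q (x - c).
  move=> c hc; apply: (reals.ge_inf hinf.2); by exists c.
have d0 : 0 <= d.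
  apply: reals.lb_le_inf; first by case: hinf.
  move=> r [c [_ ->]]; exact: (q_ge0 Hip).
have hk : forall k, exists c, C c /\ q (x - c) < d + epsn R k.
  move=> k; have [r [c [hc ->]] hr] := reals.inf_adherent (epsn_gt0 R k) hinf.
  by exists c.
have [n hnk] := boolp.choice hk.
have nC : forall k, C (n k) by move=> k; case: (hnk k).
have est : forall j k, q (n j - n k) <= 2 * epsn R j + 2 * epsn R k.
  move=> j k.
  have hp := parallelogram Hip (x - n k) (x - n j).
  have mid : (2 : R[i]) *: (x - ((2 : R[i])^-1 *: (n j + n k))) = x - n k + (x - n j).
    rewrite scalerBr scalerA mulfV; last by rewrite pnatr_eq0.
    rewrite scale1r scaler_nat mulr2n opprD addrACA (addrC (x - n j)). by [].
  have e1 : x - n k - (x - n j) = n j - n k by rewrite opprB addrC -addrA addKr.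
  have e1' : q (x - n k - (x - n j)) = q (n j - n k) by congr (Submission.q ip _).
  rewrite e1' -mid (qZ Hip) in hp.
  have hm : C ((2 : R[i])^-1 *: (n j + n k)) by apply: CZ; apply: CD.
  have := dlb _ hm.
  case: (hnk j) => _ hj; case: (hnk k) => _ hk2.
  have r2 : complex.Re (2 : R[i]) = 2 by rewrite mulr2n c1 cD /=; lra.
  have i2 : complex.Im (2 : R[i]) = 0 by rewrite mulr2n c1 cD /= addr0.
  rewrite r2 i2 in hp.
  move=> hd; move: hp hd hj hk2; clear; set Q := q (x - _); move=> hp hd hj hk2.
  nra.
have cauchy : cauchy_seq ip n.
  move=> e e0.
  have e40 : 0 < e ^+ 2 / 4 by rewrite divr_gt0 // exprn_gt0.
  have [N HN] := epsn_small e40.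
  exists N => j1 k1 hj1 hk1'.
  apply: (@lt_le_trans _ _ (Num.sqrt (e ^+ 2))); last by rewrite sqrtr_sqr ger0_norm // ltW.
  rewrite /hnorm ltr_sqrt ?exprn_gt0 //.
  have := est j1 k1; have := HN _ hj1; have := HN _ hk1'; rewrite -/(q _); lra.
have [l hl] := Hcomp cauchy.
have lC : C l := Clim nC hl.
have qle : q (x - l) <= d.
  apply/ler_addgt0Pr => eps eps0.
  pose dl := Num.min 1 (eps / (2 * (d + 3))).
  have dl0 : 0 < dl by rewrite lt_min ltr01 /= divr_gt0 // mulr_gt0 //; lra.
  have dl1 : dl <= 1 by rewrite ge_min lexx.
  have dl2 : dl * (d + 3) <= eps / 2.
    have : dl <= eps / (2 * (d + 3)) by rewrite ge_min lexx orbT.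
    have d3 : 0 < d + 3 by lra.
    move=> h; apply: (le_trans (ler_wpM2r (ltW d3) h)).
    rewrite (_ : eps / (2 * (d + 3)) * (d + 3) = eps / 2) //.
    by field; apply: lt0r_neq0.
  have [N1 HN1] := hl dl dl0.
  have e20 : 0 < Num.min 1 (eps / 2) by rewrite lt_min ltr01 /= divr_gt0.
  have [N2 HN2] := epsn_small e20.
  pose k := maxn N1 N2.
  have h1 := HN1 k (leq_maxl _ _).
  have h2 := HN2 k (leq_maxr _ _).
  have e21 : Num.min 1 (eps / 2) <= 1 by rewrite ge_min lexx.
  have e22 : Num.min 1 (eps / 2) <= eps / 2 by rewrite ge_min lexx orbT.
  have tri := hn_tri Hip (x - n k) (n k - l).
  rewrite (_ : x - n k + (n k - l) = x - l) in tri; last by rewrite -addrA addKr.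
  have [_ hk1] := hnk k.
  have s1 := hn_sqr Hip (x - n k).
  have s2 := hn_sqr Hip (x - l).
  have g1 := hn_ge0 ip (x - n k).
  have g2 := hn_ge0 ip (n k - l).
  have g3 := hn_ge0 ip (x - l).
  rewrite -s2.
  move: tri h1 h2 e21 e22 dl1 dl2 hk1 s1 g1 g2 g3 d0 eps0 dl0.
  set a := hnorm ip (x - l); set b := hnorm ip (x - n k); set c := hnorm ip (n k - l).
  set ee := Num.min 1 (eps / 2); set ek := epsn R k.
  move=> tri h1 h2 e21 e22 dl1 dl2 hk1 s1 g1 g2 g3 d0 eps0 dl0.
  have hb2 : b ^+ 2 < d + 1 by lra.
  have hb1 : 2 * b <= b ^+ 2 + 1 by have := sqr_ge0 (b - 1); lra.
  have hbc1 : 2 * b * c <= (b ^+ 2 + 1) * c by rewrite ler_wpM2r.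
  have hbc2 : (b ^+ 2 + 1) * c <= (d + 2) * c by rewrite ler_wpM2r //; lra.
  have hbc3 : (d + 2) * c <= (d + 2) * dl by rewrite ler_wpM2l ?ltW //; lra.
  have hbc : 2 * b * c <= (d + 2) * dl by lra.
  have hcc : c ^+ 2 <= dl by nra.
  have : a ^+ 2 <= (b + c) ^+ 2 by nra.
  nra.
exists l; split => // c hc.
have := @form_min _ _ _ Hip (fun v => v) (@id_lin R V) (@id_sa R V ip) (fun v => ipxx_ge0 Hip v) (x - l) c.
apply => t /=.
rewrite -/(q _) -/(q _).
apply: (le_trans qle).
rewrite (_ : x - l + t *: c = x - (- t *: c + l)); last by rewrite scaleNr opprD opprK -addrA (addrC (- l)).
apply: dlb; exact: Clin.
Qed.

End Proj.


Section Ops.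
Variables (R : realType) (V : lmodType R[i]) (ip : V -> V -> R[i]).
Hypothesis Hip : is_inner_product ip.
Local Notation q := (q ip).
Local Notation hn := (hnorm ip).

Lemma ip_uniq u v : (forall x, ip x u = ip x v) -> u = v.
Proof.
move=> h; apply/eqP; rewrite -subr_eq0; apply/eqP; apply: (ipxx_eq0 Hip).
by rewrite (ipBr Hip) h subrr.
Qed.

Lemma ip_uniql u v : (forall x, ip u x = ip v x) -> u = v.
Proof.
move=> h; apply: ip_uniq => x; by rewrite (ipJ Hip u) (ipJ Hip v) h.
Qed.

Lemma conv_q u l e : 0 < e -> converges ip u l -> exists N, forall n, (N <= n)%N -> q (u n - l) < e.
Proof.
move=> e0 hc; have [N HN] := hc (Num.sqrt e) (ltac:(by rewrite sqrtr_gt0) : 0 < Num.sqrt e).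
exists N => n hn'; have h := HN n hn'.
rewrite -(hn_sqr Hip) -(sqr_sqrtr (ltW e0)).
have := hn_ge0 ip (u n - l); nra.
Qed.

Lemma bounded_lin f : bounded_op ip f -> forall (a : R[i]) x y, f (a *: x + y) = a *: f x + f y.
Proof. by case. Qed.

Lemma kernel_closed (f : V -> V) u l : bounded_op ip f ->
  (forall n, f (u n) = 0) -> converges ip u l -> f l = 0.
Proof.
move=> fb hu hc.
have [M [M0 HM]] := bound_ge0 fb.
have flin := bounded_lin fb.
apply: (q_eq0 Hip); apply/eqP; rewrite eq_le (q_ge0 Hip) andbT.
apply/ler_addgt0Pr => e e0.
have M1 : 0 < M ^+ 2 + 1 by have := sqr_ge0 M; lra.
have [k1 k2] := inv_facts M1.
have [N HN] := conv_q (mulr_gt0 e0 k1) hc.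
have h := HN N (leqnn N).
have hq := q_bound Hip M0 HM (u N - l).
rewrite (BB flin) hu sub0r (qN Hip) in hq.
have : M ^+ 2 * q (u N - l) <= (M ^+ 2 + 1) * (e * (M ^+ 2 + 1)^-1).
  have := q_ge0 Hip (u N - l); have := sqr_ge0 M; nra.
have -> : (M ^+ 2 + 1) * (e * (M ^+ 2 + 1)^-1) = e by field; apply: lt0r_neq0.
rewrite add0r; lra.
Qed.

Lemma bounded_comp f g : bounded_op ip f -> bounded_op ip g -> bounded_op ip (fun x => f (g x)).
Proof.
move=> hf hg; split.
  by move=> a x y; rewrite (bounded_lin hg) (bounded_lin hf).
have [M [M0 HM]] := bound_ge0 hf.
have [K [K0 HK]] := bound_ge0 hg.
exists (M * K) => x; apply: (le_trans (HM _)); rewrite -mulrA ler_wpM2l //.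
Qed.

Lemma bounded_add f g : bounded_op ip f -> bounded_op ip g -> bounded_op ip (fun x => f x + g x).
Proof.
move=> hf hg; split.
  move=> a x y; rewrite (bounded_lin hg) (bounded_lin hf) scalerDr.
  by rewrite -!addrA; congr (_ + _); rewrite addrCA.
have [M [M0 HM]] := bound_ge0 hf.
have [K [K0 HK]] := bound_ge0 hg.
exists (M + K) => x; apply: (le_trans (hn_tri Hip _ _)); rewrite mulrDl lerD //.
Qed.

End Ops.


Section PrOp.
Variables (R : realType) (V : lmodType R[i]) (ip : V -> V -> R[i]).
Hypothesis Hip : is_inner_product ip.
Hypothesis Hcomp : complete ip.
Variable C : V -> Prop.
Hypothesis HC : closed_subspace ip C.
Local Notation q := (q ip).
Local Notation hn := (hnorm ip).

Definition prC (x : V) : V := proj1_sig (boolp.cid (proj_ex Hip Hcomp HC x)).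

Lemma prP x : C (prC x) /\ (forall c, C c -> ip (x - prC x) c = 0).
Proof. rewrite /prC; case: (boolp.cid _) => p hp; exact: hp. Qed.
Lemma prC_in x : C (prC x). Proof. by case: (prP x). Qed.
Lemma prC_orth x c : C c -> ip (x - prC x) c = 0. Proof. by case: (prP x) => _; apply. Qed.

Lemma prC_uniq x p : C p -> (forall c, C c -> ip (x - p) c = 0) -> prC x = p.
Proof.
move=> hp hop.
have hz : C (prC x - p) by apply: (CB HC) => //; exact: prC_in.
apply/eqP; rewrite -subr_eq0; apply/eqP; apply: (ipxx_eq0 Hip).
have e : prC x - p = (x - p) - (x - prC x) by rewrite opprB [RHS]addrC addrA subrK.
by rewrite {1}e (ipBl Hip) hop // prC_orth // subrr.
Qed.

Lemma prC_fix c : C c -> prC c = c.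
Proof. by move=> hc; apply: prC_uniq => // c' _; rewrite subrr (ip0l Hip). Qed.

Lemma prC_orth0 x : (forall c, C c -> ip x c = 0) -> prC x = 0.
Proof. by move=> h; apply: prC_uniq; [exact: (C0 HC) | move=> c hc; rewrite subr0 h]. Qed.

Lemma prC_lin (a : R[i]) x y : prC (a *: x + y) = a *: prC x + prC y.
Proof.
apply: prC_uniq; first by apply: (Clin HC); exact: prC_in.
move=> c hc.
have h1 := prC_orth x hc; have h2 := prC_orth y hc.
rewrite !(ipBl Hip) in h1 h2 *.
rewrite !(ipDl Hip) !(ipZl Hip).
move/eqP: h1; rewrite subr_eq0 => /eqP ->.
move/eqP: h2; rewrite subr_eq0 => /eqP ->.
ring.
Qed.

Lemma prC_q x : q (prC x) <= q x.
Proof.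
have e : x = prC x + (x - prC x) by rewrite addrC subrK.
rewrite {2}e (qD Hip) (ipJ Hip (x - prC x)) prC_orth; last exact: prC_in.
rewrite conj0 c0 /=; have := q_ge0 Hip (x - prC x); lra.
Qed.

Lemma prC_bounded : bounded_op ip prC.
Proof.
split; first exact: prC_lin.
exists 1 => x; rewrite mul1r /hnorm ler_sqrt ?(q_ge0 Hip) //; exact: prC_q.
Qed.

End PrOp.

Section Riesz.
Variables (R : realType) (V : lmodType R[i]) (ip : V -> V -> R[i]).
Hypothesis Hip : is_inner_product ip.
Hypothesis Hcomp : complete ip.
Local Notation q := (q ip).
Local Notation hn := (hnorm ip).

Lemma riesz (f : V -> R[i]) (M : R) :
  (forall (a : R[i]) x y, f (a *: x + y) = a * f x + f y) ->
  (forall x, complex.Re (f x) ^+ 2 + complex.Im (f x) ^+ 2 <= M * q x) ->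
  exists r, forall x, f x = ip x r.
Proof.
move=> flin fb.
have fD : forall x y, f (x + y) = f x + f y by move=> x y; have := flin 1 x y; rewrite scale1r mul1r.
have f0 : f 0 = 0 by apply: (addrI (f 0)); rewrite -fD !addr0.
have fZ : forall a x, f (a *: x) = a * f x by move=> a x; have := flin a x 0; rewrite addr0 f0 addr0.
have fB : forall x y, f (x - y) = f x - f y.
  by move=> x y; rewrite fD -scaleN1r fZ mulN1r.
pose M' := `|M| + 1.
have M'0 : 0 < M' by rewrite /M'; have := normr_ge0 M; lra.
have fb' : forall x, complex.Re (f x) ^+ 2 + complex.Im (f x) ^+ 2 <= M' * q x.
  move=> x; apply: (le_trans (fb x)); apply: ler_wpM2r; first exact: (q_ge0 Hip).
  by rewrite /M'; have := ler_norm M; lra.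
pose K := fun x => f x = 0.
have HK : closed_subspace ip K.
  split; first exact: f0.
    by move=> a x y; rewrite /K flin => -> ->; rewrite mulr0 addr0.
  move=> u l hu hc; rewrite /K.
  case E: (f l) => [a b].
  apply: ceq0; apply/ler_addgt0Pr => e e0; rewrite add0r.
  have [k1 k2] := inv_facts M'0.
  have [N HN] := conv_q Hip (mulr_gt0 e0 k1) hc.
  have h := HN N (leqnn N).
  have := fb' (u N - l); rewrite fB hu E sub0r cN /=.
  have : M' * q (u N - l) <= M' * (e * M'^-1) by rewrite ler_wpM2l ?ltW.
  have -> : M' * (e * M'^-1) = e by field; apply: lt0r_neq0.
  lra.
have [h0|hn0] := boolp.pselect (forall x, f x = 0).
  by exists 0 => x; rewrite h0 (ip0r Hip).
have [x0 hx0] : exists x0, f x0 <> 0.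
  by apply/boolp.existsNP.
pose z := x0 - prC Hip Hcomp HK x0.
have fz : f z = f x0 by rewrite /z fB (prC_in Hip Hcomp HK x0 : f _ = 0) subr0.
have zo : forall k, K k -> ip z k = 0 by move=> k hk; exact: prC_orth.
have zz : ip z z != 0.
  apply/eqP => /(ipxx_eq0 Hip) hz; apply: hx0; by rewrite -fz hz f0.
have fz0 : f z != 0 by rewrite fz; apply/eqP.
exists (((f z) / ip z z)^* *: z) => x.
have hw : K (x - (f x / f z) *: z) by rewrite /K fB fZ mulfVK // subrr.
have := zo _ hw; rewrite (ipBr Hip) (ipZr Hip) => /eqP; rewrite subr_eq0 => /eqP hxz.
have hxz' : (ip x z) = (f x / f z) * ip z z.
  by rewrite (ipJ Hip z x) hxz; set a := f x / f z; rewrite conjM conjK -(ipJ Hip z z).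
rewrite (ipZr Hip) conjK hxz'.
by field; apply/andP; split.
Qed.

Lemma adjoint_ex (Q : V -> V) : bounded_op ip Q ->
  exists Qs, bounded_op ip Qs /\ is_adjoint ip Q Qs.
Proof.
move=> hQ.
have Qlin := bounded_lin hQ.
have [M [M0 HM]] := bound_ge0 hQ.
have hr : forall y, exists r, forall x, ip (Q x) y = ip x r.
  move=> y; apply: (@riesz (fun x => ip (Q x) y) (M ^+ 2 * q y)).
    by move=> a x x'; rewrite Qlin (ipDl Hip) (ipZl Hip).
  move=> x; apply: (le_trans (CS Hip _ _)).
  rewrite mulrAC; apply: ler_wpM2r; first exact: (q_ge0 Hip).
  exact: (q_bound Hip M0 HM).
have [Qs hQs] := boolp.choice hr.
have adj : is_adjoint ip Q Qs by move=> x y; exact: hQs.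
exists Qs; split => //; split.
  move=> a y y'; apply: (ip_uniq Hip) => x.
  by rewrite -adj (ipDr Hip) (ipZr Hip) (ipDr Hip) (ipZr Hip) -!adj.
exists M => y.
have h1 : q (Qs y) <= hn (Q (Qs y)) * hn y.
  by rewrite /Submission.q -adj; exact: (Re_le Hip).
have h2 := HM (Qs y).
have g1 := hn_ge0 ip (Qs y); have g2 := hn_ge0 ip y; have g3 := hn_ge0 ip (Q (Qs y)).
rewrite -(hn_sqr Hip) in h1.
have h3 : hn (Q (Qs y)) * hn y <= M * hn (Qs y) * hn y by rewrite ler_wpM2r.
have h4 : hn (Qs y) ^+ 2 <= M * hn (Qs y) * hn y by lra.
move: h4 g1 g2 M0; clear; set a := hn (Qs y); set b := hn y => h4 g1 g2 M0.
have h5 : a * (a - M * b) <= 0 by nra.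
have [a0|a0] := eqVneq a 0; first by rewrite a0 mulr_ge0.
have ap : 0 < a by rewrite lt0r a0 g1.
by move: h5; rewrite pmulr_rle0 // subr_le0.
Qed.

End Riesz.


Section Main.
Variables (R : realType) (V : lmodType R[i]) (ip : V -> V -> R[i]).
Hypothesis Hip : is_inner_product ip.
Hypothesis Hcomp : complete ip.
Variable A : V -> V.
Hypothesis Ab : bounded_op ip A.
Hypothesis Apos : forall x, 0 <= ip (A x) x.
Variable S : V -> Prop.
Hypothesis HS : closed_subspace ip S.
Variable T : V -> V.
Hypothesis HT : bounded_op ip T.
Hypothesis HTS : forall x, S (T x).
Variable P : V -> V.
Hypothesis HP : orth_proj ip (ominus ip S (inter S (op_null A))) P.

Local Notation N := (inter S (op_null A)).
Local Notation M := (ominus ip S (inter S (op_null A))).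

Let Alin := bounded_lin Ab.
Let Tlin := bounded_lin HT.
Lemma SA x y : ip (A x) y = ip x (A y).
Proof. exact: (pos_sa Hip Alin Apos). Qed.

Lemma NE x : N x <-> S x /\ A x = 0. Proof. by []. Qed.

Lemma HN : closed_subspace ip N.
Proof.
split.
- by split; [exact: (C0 HS) | exact: (B0 Alin)].
- move=> a x y [hx ax] [hy ay]; split; first exact: (Clin HS).
  by rewrite /op_null Alin ax ay scaler0 addr0.
- move=> u l hu hc; split; first by apply: (Clim HS) hc => n; case: (hu n).
  by apply: (kernel_closed Hip Ab _ hc) => n; case: (hu n).
Qed.

Definition PN := prC Hip Hcomp HN.
Lemma PN_in x : N (PN x). Proof. exact: prC_in. Qed.
Lemma PN_lin : forall (a : R[i]) x y, PN (a *: x + y) = a *: PN x + PN y.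
Proof. exact: prC_lin. Qed.

Lemma Mlin a x y : M x -> M y -> M (a *: x + y).
Proof.
move=> [sx ox] [sy oy]; split; first exact: (Clin HS).
by move=> n hn; rewrite (ipDl Hip) (ipZl Hip) ox // oy // mulr0 addr0.
Qed.
Lemma MB x y : M x -> M y -> M (x - y).
Proof. by move=> hx hy; have := Mlin (-1) hy hx; rewrite scaleN1r addrC. Qed.

Let Pb : bounded_op ip P. Proof. by case: HP. Qed.
Lemma PinM x : M (P x). Proof. by case: HP. Qed.
Lemma Porth x y : M y -> ip (x - P x) y = 0. Proof. by case: HP => _ _; apply. Qed.
Let Plin := bounded_lin Pb.

Lemma P_fixM m : M m -> P m = m.
Proof.
move=> hm; apply/eqP; rewrite eq_sym -subr_eq0; apply/eqP; apply: (ipxx_eq0 Hip).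
by apply: Porth; apply: MB => //; exact: PinM.
Qed.

Lemma P_N0 n : N n -> P n = 0.
Proof.
move=> hn; apply: (ipxx_eq0 Hip).
have h1 : ip (n - P n) (P n) = 0 by apply: Porth; exact: PinM.
have h2 : ip (P n) n = 0 by case: (PinM n) => _; apply.
rewrite (ipBl Hip) (ipJ Hip (P n) n) h2 conj0 sub0r in h1.
by move/eqP: h1; rewrite oppr_eq0 => /eqP.
Qed.

Lemma NS x : N x -> S x. Proof. by case. Qed.
Lemma MS x : M x -> S x. Proof. by case. Qed.

Lemma D1 s : S s -> M (s - PN s).
Proof.
move=> hs; split; first by apply: (CB HS) => //; apply: NS; exact: PN_in.
by move=> n hn; apply: prC_orth.
Qed.

Lemma D2 s : S s -> P s = s - PN s.
Proof.
move=> hs; have e : s = PN s + (s - PN s) by rewrite addrC subrK.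
by rewrite {1}e (BD Plin) (P_N0 (PN_in s)) add0r P_fixM //; exact: D1.
Qed.

Lemma PN_M0 m : M m -> PN m = 0.
Proof. by move=> [_ hm]; apply: prC_orth0. Qed.
Lemma PN_fix n : N n -> PN n = n.
Proof. exact: prC_fix. Qed.

Lemma AZ z : ip (A z) z = 0 -> A z = 0.
Proof.
move=> h.
have k : forall w, ip (A z) w = 0.
  move=> w; apply: (form_min Hip Alin SA Apos) => t.
  rewrite h c0 /=; by have [_ ->] := ge0E (Apos (z + t *: w)).
by apply: (ipxx_eq0 Hip); apply: k.
Qed.

Lemma AN x : N x -> A x = 0. Proof. by case. Qed.

Section Fwd.
Hypothesis Hmin : forall y s, S s -> Anorm ip A (y - T y) <= Anorm ip A (y - s).

Lemma Aperp y s : S s -> ip (A (y - T y)) s = 0.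
Proof.
move=> hs; apply: (form_min Hip Alin SA Apos) => t.
have hs' : S (T y - t *: s) by apply: (CB HS) => //; exact: (CZ HS).
have := Hmin y hs'.
rewrite /Anorm (_ : y - (T y - t *: s) = y - T y + t *: s); last by rewrite opprB addrA [LHS]addrAC.
by rewrite ler_sqrt //; have [_ ->] := ge0E (Apos (y - T y + t *: s)).
Qed.

Lemma T1 s : S s -> A (s - T s) = 0.
Proof. by move=> hs; apply: AZ; apply: Aperp; apply: (CB HS). Qed.

Lemma T2 m : M m -> P (T m) = m.
Proof.
move=> hm; have hN : N (m - T m) by split; [apply: (CB HS); [exact: MS|] | exact: T1 (MS hm)].
by rewrite -{1}(subKr m (T m)) (BB Plin) P_fixM // P_N0 // subr0.
Qed.

Lemma T3 n : N n -> P (T n) = 0.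
Proof.
move=> hn; apply: P_N0.
have hN : N (n - T n) by split; [apply: (CB HS); [exact: NS|] | exact: T1 (NS hn)].
rewrite -(subKr n (T n)); apply: (CB HN) => //.
Qed.

Lemma fwd_oblique : oblique_proj ip M (orth ip (op_image A S)) (fun x => P (T x)).
Proof.
split.
- exact: (bounded_comp Pb HT).
- by move=> x; rewrite T2 //; exact: PinM.
- move=> y; split; first by move=> hy; exists y; rewrite T2.
  by move=> [x ->]; exact: PinM.
- move=> x; split.
  + move=> h.
    have hA : forall s, S s -> ip (A x) s = 0.
      by move=> s hs; rewrite SA; apply: h; exists s.
    have hT : forall s, S s -> ip (A (T x)) s = 0.
      move=> s hs; have := Aperp x hs; rewrite (BB Alin) (ipBl Hip) hA // sub0r.
      by move/eqP; rewrite oppr_eq0 => /eqP.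
    have ATx : A (T x) = 0 by apply: AZ; apply: hT.
    by apply: P_N0.
  + move=> h y [s [hs ->]].
    have e := D2 (HTS x); rewrite h in e.
    have hTN : N (T x) by move/eqP: e; rewrite eq_sym subr_eq0 => /eqP ->; exact: PN_in.
    rewrite -SA; have := Aperp x hs; rewrite (BB Alin) (AN hTN) subr0. by [].
Qed.

Definition Q' x := P (T x) + PN x.

Lemma Q'b : bounded_op ip Q'.
Proof. apply: (bounded_add Hip (bounded_comp Pb HT)); exact: prC_bounded. Qed.

Lemma Q'S x : S (Q' x).
Proof. apply: (CD HS); [exact: MS (PinM _) | exact: NS (PN_in _)]. Qed.

Lemma Q'fix s : S s -> Q' s = s.
Proof.
move=> hs; rewrite /Q'.
have e : s = PN s + (s - PN s) by rewrite addrC subrK.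
rewrite {1}e (BD Tlin) (BD Plin) (T3 (PN_in s)) add0r T2; last exact: D1.
by rewrite subrK.
Qed.

Lemma K1 x s : S s -> ip (A x) s = ip (A (Q' x)) s.
Proof.
move=> hs.
have e : A (x - Q' x) = A (x - T x).
  rewrite /Q' !(BB Alin) (BD Alin) (AN (PN_in x)) addr0 (D2 (HTS x)) (BB Alin).
  by rewrite (AN (PN_in _)) subr0.
have := Aperp x hs; rewrite -e (BB Alin) (ipBl Hip).
by move/eqP; rewrite subr_eq0 => /eqP.
Qed.

Lemma fwd_compat : compatible ip A S.
Proof.
have [Qs [Qsb adj]] := adjoint_ex Hip Hcomp Q'b.
exists Q', Qs; split => //.
- exact: Q'b.
- by move=> x; apply: Q'fix; exact: Q'S.
- move=> y; split; first by move=> hy; exists y; rewrite Q'fix.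
  by move=> [x ->]; exact: Q'S.
- move=> x; apply: (ip_uniql Hip) => z.
  rewrite (ipJ Hip z (Qs (A x))) -adj -(ipJ Hip (Q' z) (A x)).
  rewrite [RHS](K1 x (Q'S z)) [RHS]SA [RHS](ipJ Hip (A (Q' z)) (Q' x)) -(K1 z (Q'S x)).
  by rewrite [ip (A z) _]SA (ipJ Hip (A (Q' x)) z) conjK.
Qed.

End Fwd.

Lemma bwd (Q : V -> V) : oblique_proj ip M (orth ip (op_image A S)) Q ->
  (forall x, P (T x) = Q x) ->
  forall y s, S s -> Anorm ip A (y - T y) <= Anorm ip A (y - s).
Proof.
move=> [Qb Qidem Qrange Qnull] hPT y s hs.
have Qlin := bounded_lin Qb.
have K2 : forall s', S s' -> ip (A (y - T y)) s' = 0.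
  move=> s' hs'.
  have hn : orth ip (op_image A S) (y - Q y).
    by apply/Qnull; rewrite /op_null (BB Qlin) Qidem subrr.
  have e : A (y - Q y) = A (y - T y).
    by rewrite -hPT (D2 (HTS y)) !(BB Alin) (AN (PN_in _)) subr0.
  by rewrite -e SA; apply: hn; exists s'.
have hv : S (T y - s) by apply: (CB HS).
rewrite /Anorm ler_sqrt; last by have [_ ->] := ge0E (Apos (y - s)).
rewrite (_ : y - s = (y - T y) + (T y - s)); last by rewrite addrA subrK.
have K2' := K2 _ hv.
have [E E0] := ge0E (Apos (T y - s)).
move: K2' E E0; set u := y - T y; set v := T y - s => K2' E E0; clearbody u v.
rewrite (BD Alin) !(ipDl Hip) !(ipDr Hip) K2' (SA v) (ipJ Hip (A u)) K2'.
rewrite conj0 addr0 add0r E.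
case: (ip (A u) u) => a b; by rewrite cD /= lerDl.
Qed.

End Main.


Unset Implicit Arguments. Set Strict Implicit.

Theorem mainTheorem7 (R : realType) (V : lmodType R[i]) (ip : V -> V -> R[i])
  (HH : hilbert_space ip) (Hsep : separable ip)
  (A : V -> V) (HA : positive_op ip A)
  (S : V -> Prop) (HS : closed_subspace ip S)
  (T : V -> V) (HT : bounded_op ip T) (HTS : forall x, S (T x))
  (P : V -> V)
  (HP : orth_proj ip (ominus ip S (inter S (op_null A))) P) :
  A_projection ip A S T <->
  (compatible ip A S /\
   exists Q : V -> V,
     oblique_proj ip (ominus ip S (inter S (op_null A)))
                     (orth ip (op_image A S)) Q /\
     forall x, P (T x) = Q x).
Proof.
case: HH => Hip Hcomp; case: HA => Ab Apos.
split.
- case=> _ Hmin; split.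
    exact: (fwd_compat Hip Hcomp Ab Apos HS HT HTS HP Hmin).
  exists (fun x => P (T x)); split => //.
  exact: (fwd_oblique Hip Hcomp Ab Apos HS HT HTS HP Hmin).
- case=> _ [Q [hQ hPT]]; split => //.
  exact: (bwd Hip Hcomp Ab Apos HS HTS HP hQ hPT).
Qed.
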